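(* Let $(M,d)$ be a bounded metric space such that the family $\mathcal{A}(M)$ of admissible subsets is compact and has normal structure. Then every orbitally wrt nonexpansive mapping $T: M\to M$ has a fixed point in $M$.
   Context: For $x\in M$ and $K\subseteq M$: $r_x(K)=\sup\{d(x,y):y\in K\}$, $r(K)=\inf\{r_x(K):x\in K\}$, $\delta(K)$ is the diameter of $K$. A bounded subset is admissible if it equals the intersection of all closed balls of $M$ containing it. $\mathcal{A}(M)$ is compact if every descending chain of nonempty admissible sets has nonempty intersection; it has normal structure if $r(K)<\delta(K)$ for every $K\in\mathcal{A}(M)$ with $\delta(K)>0$. $O_T(y)=\{y,Ty,T^2y,\dots\}$; $T$ is orbitally wrt nonexpansive if $d(Tx,Ty)\le r_x(O_T(y))$ for all $x,y\in M$. *)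

(* Defs.v *)
From mathcomp Require Import all_boot all_order all_algebra.
From mathcomp Require Import classical_sets boolp reals.
Set Implicit Arguments. Unset Strict Implicit. Unset Printing Implicit Defensive.
Import Order.TTheory GRing.Theory Num.Theory.
Local Open Scope ring_scope.
Local Open Scope classical_set_scope.

Section MetricDefs.
Variables (R : realType) (M : Type) (d : M -> M -> R).

Definition is_metric : Prop :=
  (forall x y, d x y = 0 <-> x = y) /\
  (forall x y, d x y = d y x) /\
  (forall x y z, d x z <= d x y + d y z).

Definition bounded_metric : Prop := exists B : R, forall x y, d x y <= B.

Definition cball (x : M) (r : R) : set M := [set y | d x y <= r].

Definition admissible (K : set M) : Prop :=
  K = [set z | forall (x : M) (r : R), 0 <= r -> K `<=` cball x r -> cball x r z].

Definition rad_at (x : M) (K : set M) : R := sup [set d x y | y in K].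

Definition cheb_rad (K : set M) : R := inf [set rad_at x K | x in K].

Definition diam (K : set M) : R := sup [set d x y | x in K & y in K].

(* A(M) is compact: every descending chain (a family totally ordered by
   inclusion) of nonempty admissible sets has nonempty intersection *)
Definition adm_compact : Prop :=
  forall F : set (set M),
    (forall K, F K -> admissible K /\ K !=set0) ->
    (forall K L, F K -> F L -> K `<=` L \/ L `<=` K) ->
    (\bigcap_(K in F) K) !=set0.

Definition adm_normal : Prop :=
  forall K, admissible K -> 0 < diam K -> cheb_rad K < diam K.

Definition orbit (T : M -> M) (y : M) : set M := range (fun n : nat => iter n T y).

Definition orbitally_nonexpansive (T : M -> M) : Prop :=
  forall x y, d (T x) (T y) <= rad_at x (orbit T y).

End MetricDefs.

(* Main.v *)
Require Import Defs.
From mathcomp Require Import all_boot all_order all_algebra.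
From mathcomp Require Import classical_sets boolp reals.
Set Implicit Arguments. Unset Strict Implicit. Unset Printing Implicit Defensive.
Import Order.TTheory GRing.Theory Num.Theory.
Local Open Scope classical_set_scope.
Local Open Scope ring_scope.

Lemma Zorn_min (T : Type) (P : set (set T)) :
  (forall F : set (set T), F `<=` P -> total_on F subset ->
      P (\bigcap_(X in F) X)) ->
  exists A, P A /\ forall B, P B -> B `<=` A -> B = A.
Proof.
move=> totP; pose R (sA sB : P) := `[< sval sB `<=` sval sA >].
have {}totR F (FR : total_on F R) : exists sB, forall sA, F sA -> R sA sB.
   have FP : [set val x | x in F] `<=` P.
     by move=> _ [X FX <-]; apply: set_mem; exact/valP.
   have totF : total_on [set val x | x in F] subset.
     move=> _ _ [X FX <-] [Y FY <-].
     by have [/asboolP|/asboolP] := FR _ _ FX FY; [right|left].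
   exists (SigSub (mem_set (totP _ FP totF))) => A FA.
   by apply/asboolP => /= x; apply; exists A.
have [| | |sA sAmax] := Zorn _ _ _ totR.
- by move=> ?; apply/asboolP; exact: subset_refl.
- move=> ? ? ? /asboolP h1 /asboolP h2; apply/asboolP; exact: (subset_trans h2 h1).
- move=> [A PA] [B PB] /asboolP AB /asboolP BA; by apply: eq_exist; apply/seteqP; split.
- exists (val sA); case: sA => A PA /= in sAmax *; split; first exact: set_mem.
  move=> B PB BA.
  have : R (exist (fun x => x \in P) A PA) (SigSub (mem_set PB)).
    by apply/asboolP.
  by move=> /(sAmax (SigSub (mem_set PB)))[].
Qed.

Section Main.
Variables (R : realType) (M : Type) (d : M -> M -> R).

Lemma adm_mem (K : set M) z : admissible d K ->
  (forall x r, 0 <= r -> K `<=` cball d x r -> cball d x r z) -> K z.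
Proof. by move=> hK H; rewrite hK; exact: H. Qed.

Lemma adm_intro (K : set M) :
  (forall z, (forall x r, 0 <= r -> K `<=` cball d x r -> cball d x r z) -> K z) ->
  admissible d K.
Proof.
move=> H; apply/seteqP; split => z; last exact: H.
by move=> Kz x r _ Ks; exact: Ks.
Qed.

End Main.

Theorem corollary2p4 (R : realType) (M : Type) (d : M -> M -> R)
  (m0 : M)
  (hmet : is_metric d) (hbdd : bounded_metric d)
  (hcomp : adm_compact d) (hnorm : adm_normal d)
  (T : M -> M) (hT : orbitally_nonexpansive d T) :
  exists x : M, T x = x.
Proof.
case: hmet => d0 [dC dtri]; case: hbdd => B hB.
have dge0 x y : 0 <= d x y.
  have := dtri x y x; rewrite (proj2 (d0 x x) erefl) (dC y x) => h.
  by rewrite -(@pmulr_rge0 _ 2) // mulr2n mulrDl !mul1r.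
have ubd (S : set M) x : has_ubound [set d x y | y in S].
  by exists B => _ [y _ <-].
pose P (K : set M) := [/\ admissible d K, K !=set0 & forall x, K x -> K (T x)].
have [K [[admK [k Kk] TK] Kmin]] : exists A, P A /\ forall B, P B -> B `<=` A -> B = A.
  apply: Zorn_min => F FP Ftot; split.
  - apply: adm_intro => z Hz X FX; case: (FP _ FX) => aX _ _; apply: adm_mem aX _ => x r r0 Xs.
    apply: Hz => // y Fy; apply: Xs; exact: Fy.
  - apply: hcomp => [K FK|K L FK FL]; first by case: (FP _ FK).
    exact: Ftot.
  - by move=> x Fx X FX; case: (FP _ FX) => _ _; apply; exact: Fx.
(* covering of T(K) equals K *)
have hC : forall x r, 0 <= r -> (forall y, K y -> d x (T y) <= r) ->
    forall z, K z -> d x z <= r.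
  pose C := [set z | forall x r, 0 <= r -> T @` K `<=` cball d x r -> cball d x r z].
  have CK : C `<=` K.
    move=> z Cz; apply: adm_mem admK _ => x r r0 Ks; apply: Cz => //.
    by move=> _ [y Ky <-]; apply: Ks; exact: TK.
  have TKC : T @` K `<=` C by move=> _ [y Ky <-] x r r0; apply.
  have PC : P C.
    split.
    - apply: adm_intro => z Hz x r r0 Ks; apply: Hz => //.
      by move=> w Cw; exact: Cw.
    - by exists (T k); apply: TKC; exists k.
    - by move=> x Cx; apply: TKC; exists x => //; exact: CK.
  have eCK := Kmin C PC CK.
  move=> x r r0 H z Kz; rewrite -eCK in Kz; apply: Kz => //.
  by move=> _ [y Ky <-]; exact: H.
suff dK p q : K p -> K q -> d p q = 0.
  by exists k; symmetry; apply/d0/dK => //; exact: TK.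
move=> Kp Kq.
pose D := diam d K.
have hubD : has_ubound [set d x y | x in K & y in K].
  by exists B => _ [a _ [b _ <-]].
have leD a b : K a -> K b -> d a b <= D.
  by move=> Ka Kb; apply: ub_le_sup => //; exists a => //; exists b.
have [D0|Dgt0] : D = 0 \/ 0 < D.
  have : 0 <= D by apply: le_trans (leD _ _ Kp Kp); exact: dge0.
  by rewrite le_eqVlt => /orP[/eqP->|->]; [left|right].
  by apply/eqP; rewrite eq_le dge0 andbT -D0; exact: leD.
exfalso.
have := hnorm K admK Dgt0 => hr.
have [x0 Kx0 hx0] : exists2 x0, K x0 & rad_at d x0 K < D.
  apply: contrapT => hn; move: hr; apply/negP; rewrite -leNgt.
  apply: lb_le_inf; first by exists (rad_at d k K); exists k.
  move=> _ [u Ku <-]; rewrite leNgt; apply/negP => hlt.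
  by apply: hn; exists u.
pose rho := rad_at d x0 K.
have lerho y : K y -> d x0 y <= rho.
  by move=> Ky'; apply: ub_le_sup => //; exists y.
have rho0 : 0 <= rho by apply: le_trans (lerho _ Kx0); exact: dge0.
pose Kc := [set x | K x /\ forall y, K y -> d x y <= rho].
have PKc : P Kc.
  split.
  - apply: adm_intro => z Hz; split.
      apply: adm_mem admK _ => x r r0 Ks; apply: Hz => //.
      by move=> w [Kw _]; exact: Ks.
    move=> y Ky'; rewrite dC; apply: (Hz y rho rho0) => w [_ Hw].
    by rewrite /cball /= dC; exact: Hw.
  - by exists x0; split.
  - move=> x [Kx' Hx]; split; first exact: TK.
    apply: hC => // y Ky'; apply: le_trans (hT x y) _.
    apply: ge_sup; first by exists (d x y); exists y => //; exists 0%N.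
    move=> _ [_ [n _ <-] <-]; apply: Hx.
    by elim: n => [|n IH] //=; exact: TK.
have eKc := Kmin Kc PKc (fun x hx => proj1 hx).
have : D <= rho.
  apply: ge_sup; first by exists (d k k); exists k => //; exists k.
  move=> _ [a Ka [b Kb <-]].
  by rewrite -eKc in Ka; case: Ka => _; apply.
by rewrite leNgt hx0.
Qed.
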